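(* Let $(C,\mathfrak p,\mathfrak d)$ be a regular $q$-cycle coalgebra such that $\mathfrak p_{11}^1=0$, $\mathfrak p=\mathfrak d$, $\mathfrak p_{i0}^1=\delta_{1i}$ for all $i$, and $\mathfrak p_{1j}^1=0$ for all $j>0$. Then $\mathfrak p_{i1}^1=0$ for all $i$.
   Context: $K$ is an algebraically closed field of characteristic $0$ and $n\ge2$. $C$ is the coalgebra dual to $K[y]/\langle y^n\rangle$: basis $x_0,\dots,x_{n-1}$, $\Delta(x_i)=\sum_{j+k=i}x_j\otimes x_k$, $\epsilon(x_i)=\delta_{i0}$; $C\otimes C$ has the tensor product coalgebra structure; Sweedler notation $\Delta(b)=b_{(1)}\otimes b_{(2)}$. For linear maps $\mathfrak p,\mathfrak d\colon C\otimes C\to C$ write $a\cdot b=\mathfrak p(a\otimes b)$, $a:b=\mathfrak d(a\otimes b)$, $\mathfrak p(x_i\otimes x_j)=\sum_{k=0}^{n-1}\mathfrak p_{ij}^kx_k$, $\mathfrak d(x_i\otimes x_j)=\sum_{k=0}^{n-1}\mathfrak d_{ij}^kx_k$ (indices in $\{0,\dots,n-1\}$). A triple $(C,\mathfrak p,\mathfrak d)$ with $\mathfrak p,\mathfrak d$ coalgebra morphisms is a regular $q$-magma coalgebra if there are coalgebra morphisms $a\otimes b\mapsto a^b$, $a\otimes b\mapsto a_b$ from $C\otimes C$ to $C$ with $a^{b_{(1)}}\cdot b_{(2)}=(a\cdot b_{(1)})^{b_{(2)}}=\epsilon(b)a$ and $(a:b_{(2)})_{b_{(1)}}=a_{b_{(2)}}:b_{(1)}=\epsilon(b)a$.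 It is a regular $q$-cycle coalgebra if moreover for all $a,b,c$: (1) $(a\cdot b_{(1)})\cdot(c:b_{(2)})=(a\cdot c_{(2)})\cdot(b\cdot c_{(1)})$; (2) $(a\cdot b_{(1)}):(c\cdot b_{(2)})=(a:c_{(2)})\cdot(b:c_{(1)})$; (3) $(a:b_{(1)}):(c:b_{(2)})=(a:c_{(2)}):(b\cdot c_{(1)})$. *)

(* Defs.v *)
From HB Require Import structures.
From mathcomp Require Import all_boot all_order all_algebra.
Set Implicit Arguments. Unset Strict Implicit. Unset Printing Implicit Defensive.
Import GRing.Theory.

(* C = dual coalgebra of K[y]/(y^n), elements are row vectors 'rV[K]_n of
   coordinates on the basis x_0,...,x_{n-1}.
   A linear map C (x) C -> C is given by its structure constants
   f i j k = coefficient of x_k in f(x_i (x) x_j). *)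

Section Coalg.
Variable K : fieldType.
Variable n : nat.
Local Open Scope ring_scope.

Definition sc := 'I_n -> 'I_n -> 'I_n -> K.

Definition xb (i : 'I_n) : 'rV[K]_n := delta_mx 0 i.

Definition bm (f : sc) (u v : 'rV[K]_n) : 'rV[K]_n :=
  \row_k \sum_(i < n) \sum_(j < n) u 0 i * v 0 j * f i j k.

Definition eps (u : 'rV[K]_n) : K := \sum_(k < n | (val k == 0)%N) u 0 k.

(* Sweedler sum: for Delta(b) = b_(1) (x) b_(2), with
   Delta(x_j) = sum_{s+t=j} x_s (x) x_t, this is sum F(b_(1), b_(2)) where F
   is given on basis indices (F s t = F(x_s, x_t)), extended linearly. *)
Definition sw (b : 'rV[K]_n) (F : 'I_n -> 'I_n -> 'rV[K]_n) : 'rV[K]_n :=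
  \sum_(j < n) b 0 j *: \sum_(s < n) \sum_(t < n | (val s + val t == val j)%N) F s t.

(* f : C (x) C -> C is a coalgebra morphism (C (x) C with the tensor product
   coalgebra structure):
   - counit: eps(f(x_i (x) x_j)) = eps(x_i) eps(x_j);
   - comultiplication: Delta(f(x_i (x) x_j)) = sum f(x_a (x) x_c) (x) f(x_b (x) x_d)
     over a+b=i, c+d=j; compared coefficientwise at x_u (x) x_v. *)
Definition is_coalg_morph (f : sc) : Prop :=
  (forall i j k : 'I_n, val k = 0%N ->
      f i j k = ((val i == 0%N) && (val j == 0%N))%:R) /\
  (forall i j u v : 'I_n,
      \sum_(k < n | (val k == val u + val v)%N) f i j k =
      \sum_(a < n) \sum_(b < n | (val a + val b == val i)%N)
        \sum_(c < n) \sum_(d < n | (val c + val d == val j)%N)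
          f a c u * f b d v).

Definition regular_q_magma (p d : sc) : Prop :=
  is_coalg_morph p /\ is_coalg_morph d /\
  exists e h : sc, is_coalg_morph e /\ is_coalg_morph h /\
    forall a b : 'rV[K]_n,
      (* a^{b(1)} . b(2) = eps(b) a *)
      sw b (fun s t => bm p (bm e a (xb s)) (xb t)) = eps b *: a /\
      (* (a . b(1))^{b(2)} = eps(b) a *)
      sw b (fun s t => bm e (bm p a (xb s)) (xb t)) = eps b *: a /\
      (* (a : b(2))_{b(1)} = eps(b) a *)
      sw b (fun s t => bm h (bm d a (xb t)) (xb s)) = eps b *: a /\
      (* a_{b(2)} : b(1) = eps(b) a *)
      sw b (fun s t => bm d (bm h a (xb t)) (xb s)) = eps b *: a.

Definition regular_q_cycle (p d : sc) : Prop :=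
  regular_q_magma p d /\
  forall a b c : 'rV[K]_n,
    (* (1) (a . b(1)) . (c : b(2)) = (a . c(2)) . (b . c(1)) *)
    sw b (fun s t => bm p (bm p a (xb s)) (bm d c (xb t))) =
    sw c (fun s t => bm p (bm p a (xb t)) (bm p b (xb s))) /\
    (* (2) (a . b(1)) : (c . b(2)) = (a : c(2)) . (b : c(1)) *)
    sw b (fun s t => bm d (bm p a (xb s)) (bm p c (xb t))) =
    sw c (fun s t => bm p (bm d a (xb t)) (bm d b (xb s))) /\
    (* (3) (a : b(1)) : (c : b(2)) = (a : c(2)) : (b . c(1)) *)
    sw b (fun s t => bm d (bm d a (xb s)) (bm d c (xb t))) =
    sw c (fun s t => bm d (bm d a (xb t)) (bm p b (xb s))).

End Coalg.

(* Main.v *)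
Require Import Defs.
From HB Require Import structures.
From mathcomp Require Import all_boot all_order all_algebra zify.
From Stdlib Require Import FunctionalExtensionality.
Import GRing.Theory.
Local Open Scope ring_scope.

Lemma sum_one (K : fieldType) (m : nat) (F : nat -> K) (a : nat) :
  (a < m)%N -> (forall i, (i < m)%N -> i != a -> F i = 0) ->
  \sum_(i < m) F i = F a.
Proof.
move=> Ha HF; rewrite (bigD1 (Ordinal Ha)) //= big1 ?addr0 // => i Hi.
by apply: HF => //; move: Hi; apply: contra => /eqP Hia.
Qed.

Lemma sum_zero (K : fieldType) (m : nat) (F : nat -> K) :
  (forall i, (i < m)%N -> F i = 0) -> \sum_(i < m) F i = 0.
Proof. by move=> HF; rewrite big1 // => i _; apply: HF. Qed.

Lemma sum_two (K : fieldType) (m : nat) (F : nat -> K) (a b : nat) :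
  (a < m)%N -> (b < m)%N -> a != b ->
  (forall i, (i < m)%N -> i != a -> i != b -> F i = 0) ->
  \sum_(i < m) F i = F a + F b.
Proof.
move=> Ha Hb Hab HF; rewrite (bigD1 (Ordinal Ha)) //= (bigD1 (Ordinal Hb)) /=; last first.
  by rewrite -(inj_eq val_inj) /= eq_sym.
rewrite big1 ?addr0 // => i /andP[Hi1 Hi2].
apply: HF => //. all: try (move: Hi1; apply: contra => /eqP). all: try (move: Hi2; apply: contra => /eqP).
Qed.

Lemma sum_conv (K : fieldType) (n : nat) (G : nat -> nat -> K) (i : nat) :
  (i < n)%N ->
  \sum_(a < n) \sum_(b < n | (val a + val b == i)%N) G a b =
  \sum_(a < i.+1) G a (i - a)%N.
Proof.
move=> Hi.
transitivity (\sum_(a < n) (if (a <= i)%N then G a (i - a)%N else 0)).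
  apply: eq_bigr => a _; case: leqP => h.
    have Hb : (i - a < n)%N by lia.
    rewrite (big_pred1 (Ordinal Hb)) // => b /=.
    apply/eqP/eqP => [h1|->] /=; last by lia.
    by apply: val_inj => /=; rewrite -h1 addKn.
  by apply: big1 => b /eqP h2; rewrite -h2 ltnNge leq_addr in h.
have Hin : (i.+1 <= n)%N by exact: Hi.
by rewrite (big_ord_widen n (fun a => G a (i - a)%N) Hin) [RHS]big_mkcond; apply: eq_bigr => a _.
Qed.

Lemma nsum_one (K : fieldType) (m : nat) (F : nat -> K) (a : nat) :
  (a < m)%N -> (forall i, (i < m)%N -> i != a -> F i = 0) ->
  \sum_(0 <= i < m) F i = F a.
Proof. by move=> Ha HF; rewrite big_mkord; apply: sum_one. Qed.

Lemma nsum_zero (K : fieldType) (m : nat) (F : nat -> K) :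
  (forall i, (i < m)%N -> F i = 0) -> \sum_(0 <= i < m) F i = 0.
Proof. by move=> HF; rewrite big_mkord; apply: sum_zero. Qed.

Lemma nsum_two (K : fieldType) (m : nat) (F : nat -> K) (a b : nat) :
  (a < m)%N -> (b < m)%N -> a != b ->
  (forall i, (i < m)%N -> i != a -> i != b -> F i = 0) ->
  \sum_(0 <= i < m) F i = F a + F b.
Proof. by move=> Ha Hb Hab HF; rewrite big_mkord; apply: sum_two. Qed.

Lemma nsum_conv (K : fieldType) (n : nat) (G : nat -> nat -> K) (i : nat) :
  (i < n)%N ->
  \sum_(a < n) \sum_(b < n | (val a + val b == i)%N) G a b =
  \sum_(0 <= a < i.+1) G a (i - a)%N.
Proof. by move=> Hi; rewrite big_mkord; apply: sum_conv. Qed.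

Lemma main_nat (K : fieldType) (n : nat) (q : nat -> nat -> nat -> K)
 (hn : (1 < n)%N)
 (C0 : forall a b, (a < n)%N -> (b < n)%N -> q a b 0%N = ((a == 0%N) && (b == 0%N))%:R)
 (CR : forall k i j, (0 < k)%N -> (k < n)%N -> (i < n)%N -> (j < n)%N ->
        q i j k = \sum_(0 <= a < i.+1) \sum_(0 <= c < j.+1) q a c 1%N * q (i - a)%N (j - c)%N k.-1)
 (ID : forall x y z, (x < n)%N -> (y < n)%N -> (z < n)%N ->
   \sum_(0 <= s < y.+1) \sum_(0 <= i < n) \sum_(0 <= j < n) q x s i * q z (y - s)%N j * q i j 1%N =
   \sum_(0 <= s < z.+1) \sum_(0 <= i < n) \sum_(0 <= j < n) q x (z - s)%N i * q y s j * q i j 1%N)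
 (H3 : forall a, (a < n)%N -> q a 0%N 1%N = (a == 1%N)%:R)
 (H4 : forall j, (0 < j)%N -> (j < n)%N -> q 1%N j 1%N = 0) :
 forall i, (i < n)%N -> q i 1%N 1%N = 0.
Proof.
have n0 : (0 < n)%N by lia.
have A1 : forall k, (k < n)%N -> forall x, (x < n)%N -> q x 0%N k = (x == k)%:R.
  elim=> [|k IH] Hk x Hx; first by rewrite C0 // andbT.
  rewrite CR //=.
  under eq_bigr => a _ do rewrite big_nat1 subn0.
  case: x Hx => [|x] Hx.
    by rewrite big_nat1 H3 // mul0r.
  rewrite (@nsum_one _ _ _ 1%N) //; last first.
    by move=> a Ha Ha1; rewrite H3 ?(negbTE Ha1) ?mul0r //; lia.
  by rewrite H3 // mul1r subSS subn0 IH ?eqSS //; lia.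
have F0 : forall m, ((0%N == m.+1)%:R : K) = 0 by [].
have C00 : forall x, (0 < x)%N -> (x < n)%N -> q 0%N x 0%N = 0.
  by move=> x Hx0 Hxn; rewrite C0 //=; case: x Hx0 Hxn.
have [[r0 Hr0]|Hno] : (exists r, (r < n)%N && (q 0%N r 1%N != 0)) \/
                     (forall r, (r < n)%N -> q 0%N r 1%N = 0).
  case: (pickP (fun r : 'I_n => q 0%N r 1%N != 0)) => [r Hr|Hn]; first by left; exists r; rewrite ltn_ord.
  right=> r Hr; have := Hn (Ordinal Hr); by move/negbFE/eqP.
-
  have exP : exists r, (r < n)%N && (q 0%N r 1%N != 0) by exists r0.
  case: (ex_minnP exP) => r /andP[Hrn Hr] Hmin.
  have Hbelow : forall s, (s < r)%N -> q 0%N s 1%N = 0.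
    move=> s Hs; apply/eqP; apply: contraT => Hs0.
    have := Hmin s; rewrite Hs0 andbT; lia.
  have Hr1 : (0 < r)%N.
    case: r Hrn Hr {Hmin Hbelow} => [|r] // Hrn; by rewrite H3 //= eqxx.
  have A2 : forall j, (0 < j)%N -> (j < n)%N -> forall s, (s < n)%N -> (s < r * j)%N -> q 0%N s j = 0.
    elim=> [//|j IH] _ Hj s Hs Hsr.
    case: j IH Hj Hsr => [|j] IH Hj Hsr; first by apply: Hbelow; rewrite muln1 in Hsr.
    rewrite CR //=.
    rewrite big_nat1 subn0.
    apply: nsum_zero => c Hc.
    case: (ltnP c r) => Hcr; first by rewrite Hbelow // mul0r.
    rewrite IH ?mulr0 //; try lia.
  move=> i Hi.
  have := ID i 0%N r Hi ltac:(lia) Hrn.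
  rewrite big_nat1 subn0.
  rewrite (@nsum_one _ _ _ i) //; last first.
    by move=> i' Hi' Hne; apply: nsum_zero => j Hj; rewrite A1 // eq_sym (negbTE Hne) !mul0r.
  rewrite (@nsum_one _ _ _ r) //; last first.
    by move=> j Hj Hne; rewrite (A1 j) // eq_sym (negbTE Hne) mulr0 mul0r.
  rewrite !A1 // !eqxx !mul1r.
  rewrite (@nsum_two _ _ _ 0%N r) //; last first.
  - move=> s Hs Hs0 Hsr; apply: nsum_zero => i' Hi'; apply: nsum_zero => j Hj.
    case: j Hj => [|j] Hj; first by rewrite C00 ?mulr0 ?mul0r //; lia.
    by rewrite A2 ?mulr0 ?mul0r //; nia.
  - by rewrite eq_sym -lt0n.
  rewrite subn0 subnn.
  rewrite (@nsum_one _ _ _ 1%N) //; last first.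
    move=> i' Hi' Hne; apply: nsum_zero => j Hj.
    case: j Hj => [|j] Hj; first by rewrite H3 // (negbTE Hne) mulr0.
    by rewrite A1 // F0 mulr0 mul0r.
  rewrite (@nsum_one _ _ _ 0%N) //; last first.
    by move=> j Hj Hne; rewrite A1 // eq_sym (negbTE Hne) mulr0 mul0r.
  rewrite (@nsum_one _ _ _ i) //; last first.
    by move=> i' Hi' Hne; apply: nsum_zero => j Hj; rewrite A1 // eq_sym (negbTE Hne) !mul0r.
  rewrite (@nsum_one _ _ _ 1%N) //; last first.
    move=> j Hj Hne; case: j Hj Hne => [|[|j]] Hj Hne //.
      by rewrite C00 // mulr0 mul0r.
    by rewrite A2 ?mulr0 ?mul0r //; nia.
  rewrite !A1 // !eqxx /= !mulr1n !mulr1 !mul1r => /eqP.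
  rewrite eq_sym -subr_eq0 addrAC subrr add0r mulf_eq0 (negbTE Hr) /=.
  by move/eqP.
-
  have B1 : forall k, (0 < k)%N -> (k < n)%N -> forall x s, (x < n)%N -> (s < n)%N -> (x < k)%N -> q x s k = 0.
    elim=> [//|k IH] _ Hk x s Hx Hs Hxk.
    case: k IH Hk Hxk => [|k] IH Hk Hxk.
      by rewrite (_ : x = 0%N) ?Hno //; lia.
    rewrite CR //=; apply: nsum_zero => a Ha; apply: nsum_zero => c Hc.
    case: a Ha => [|a] Ha; first by rewrite Hno ?mul0r //; lia.
    by rewrite IH ?mulr0 //; lia.
  have B2 : forall k, (k < n)%N -> forall j, (j < n)%N -> q k j k = (j == 0%N)%:R.
    elim=> [|k IH] Hk j Hj; first by rewrite C0.
    rewrite CR //=.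
    rewrite (@nsum_one _ _ _ 1%N) //; last first.
      move=> a Ha Ha1; apply: nsum_zero => c Hc.
      case: a Ha Ha1 => [|[|a]] Ha Ha1 //; first by rewrite Hno ?mul0r //; lia.
      by rewrite [q (_ - _)%N _ _]B1 ?mulr0 //; lia.
    rewrite (@nsum_one _ _ _ 0%N) //; last first.
      by move=> c Hc Hc0; rewrite H4 ?mul0r //; lia.
    by rewrite H3 // mul1r subSS !subn0 IH //; lia.
  move=> i Hi; apply/eqP; apply: contraT => Hne.
  have exP : exists m, (m < n)%N && (q m 1%N 1%N != 0) by exists i; rewrite Hi.
  case: (ex_minnP exP) => M /andP[HMn HM] Hmin.
  have Hbelow : forall m, (m < M)%N -> q m 1%N 1%N = 0.
    move=> m Hm; apply/eqP; apply: contraT => Hm0.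
    have := Hmin m; rewrite Hm0 andbT; lia.
  have HM1 : (0 < M)%N.
    case: M HMn HM {Hmin Hbelow} => [|M] // HMn; by rewrite Hno // eqxx.
  have B3 : forall k, (0 < k)%N -> (k < n)%N -> forall m, (m < n)%N -> (m < M + k - 1)%N -> q m 1%N k = 0.
    elim=> [//|k IH] _ Hk m Hm HmM.
    case: k IH Hk HmM => [|k] IH Hk HmM; first by apply: Hbelow; lia.
    rewrite CR //=; apply: nsum_zero => a Ha.
    rewrite big_nat_recr //= big_nat1 subn0 subnn.
    rewrite [q (_ - _)%N 0%N _]A1 //; try lia.
    have -> : q a 1%N 1%N * ((m - a)%N == k.+1)%:R = 0.
      case: eqP => E; last by rewrite mulr0.
      by rewrite Hbelow ?mul0r //; lia.
    rewrite addr0.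
    case: (a =P 1%N) => [->|/eqP Ha1]; last by rewrite H3 ?(negbTE Ha1) ?mul0r //; lia.
    by rewrite H3 // eqxx mul1r IH //; lia.
  have := ID M M 1%N HMn HMn ltac:(lia).
  rewrite nsum_zero; last first.
    move=> s Hs; case: (ltnP s M) => HsM.
      apply: nsum_zero => i' Hi'; apply: nsum_zero => j Hj.
      case: j Hj => [|[|j]] Hj.
      - by rewrite C0 /= ?mulr0 ?mul0r //; lia.
      - by rewrite H4 ?mulr0 ?mul0r //; lia.
      - by rewrite [q 1%N _ _]B1 ?mulr0 ?mul0r //; lia.
    have -> : s = M by lia.
    rewrite subnn; apply: nsum_zero => i' Hi'.
    rewrite (@nsum_one _ _ _ 1%N) //; last first.
      by move=> j Hj Hne1; rewrite A1 // eq_sym (negbTE Hne1) mulr0 mul0r.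
    rewrite A1 // eqxx mulr1.
    case: (ltngtP i' M) => Hi'M.
    - by rewrite Hbelow ?mulr0.
    - by rewrite B1 ?mul0r //; lia.
    - by rewrite Hi'M B2 // (negbTE (lt0n_neq0 HM1)) mul0r.
  rewrite big_nat_recr //= big_nat1 subn0 subnn.
  rewrite nsum_zero; last first.
    move=> i' Hi'.
    rewrite (@nsum_one _ _ _ M) //; last first.
      by move=> j Hj HjM; rewrite A1 // eq_sym (negbTE HjM) mulr0 mul0r.
    rewrite A1 // eqxx mulr1.
    case: i' Hi' => [|[|i']] Hi'.
    - by rewrite C0 //= andbF mul0r.
    - by rewrite H4 ?mulr0.
    - by rewrite B3 ?mul0r //; lia.
  rewrite (@nsum_one _ _ _ M) //; last first.
    by move=> i' Hi' Hne'; apply: nsum_zero => j Hj; rewrite A1 // eq_sym (negbTE Hne') !mul0r.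
  rewrite (@nsum_one _ _ _ 1%N) //; last first.
    move=> j Hj Hj1; case: j Hj Hj1 => [|[|j]] Hj Hj1 //.
      by rewrite C0 //= andbF mulr0 mul0r.
    by rewrite B3 ?mulr0 ?mul0r //; lia.
  rewrite A1 // eqxx mul1r add0r => /eqP.
  by rewrite eq_sym mulf_eq0 orbb (negbTE HM).
Qed.

Definition qq (K : fieldType) (n : nat) (p : sc K n) (a b k : nat) : K :=
  match (insub a : option 'I_n), (insub b : option 'I_n), (insub k : option 'I_n) with
  | Some a', Some b', Some k' => p a' b' k'
  | _, _, _ => 0
  end.

Arguments qq {K n}.

Lemma qqE (K : fieldType) (n : nat) (p : sc K n) (a b k : 'I_n) :
  qq p a b k = p a b k.
Proof. by rewrite /qq !valK. Qed.
Arguments qqE {K n}.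

Lemma sw_xb_coord (K : fieldType) (n : nat) (F : 'I_n -> 'I_n -> 'rV[K]_n) (b k : 'I_n) :
  sw (xb K b) F 0 k = \sum_(s < n) \sum_(t < n | (val s + val t == val b)%N) F s t 0 k.
Proof.
rewrite /sw (bigD1 b) //= [X in _ + X]big1 ?addr0; last first.
  by move=> j /negbTE Hj; rewrite /xb mxE Hj /= scale0r.
rewrite !mxE !eqxx /= mul1r summxE; apply: eq_bigr => s _; by rewrite summxE.
Qed.

Lemma bm2 (K : fieldType) (n : nat) (f g h : sc K n) (a s c t k : 'I_n) :
  bm f (bm g (xb K a) (xb K s)) (bm h (xb K c) (xb K t)) 0 k =
  \sum_(i < n) \sum_(j < n) g a s i * h c t j * f i j k.
Proof.
have E : forall (g : sc K n) a s i, bm g (xb K a) (xb K s) 0 i = g a s i.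
  move=> g' a' s' i; rewrite /bm mxE (bigD1 a') //= [X in _ + X]big1 ?addr0; last first.
    by move=> i' /negbTE Hi'; apply: big1 => j _; rewrite /xb !mxE eqxx Hi' /= !mul0r.
  rewrite (bigD1 s') //= [X in _ + X]big1 ?addr0; last first.
    by move=> j /negbTE Hj; rewrite /xb !mxE eqxx Hj /= mulr0 mul0r.
  by rewrite /xb !mxE !eqxx /= !mul1r.
rewrite /bm mxE; apply: eq_bigr => i _; apply: eq_bigr => j _.
by rewrite -/(bm g _ _) -/(bm h _ _) !E.
Qed.

Lemma cyc_coord1 (K : fieldType) (n : nat) (f g h : sc K n) (a b c k : 'I_n) :
  sw (xb K b) (fun s t => bm f (bm g (xb K a) (xb K s)) (bm h (xb K c) (xb K t))) 0 k =
  \sum_(s < n) \sum_(t < n | (val s + val t == val b)%N)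
     \sum_(i < n) \sum_(j < n) g a s i * h c t j * f i j k.
Proof. rewrite sw_xb_coord; apply: eq_bigr => s _; apply: eq_bigr => t _; exact: bm2. Qed.

Lemma cyc_coord2 (K : fieldType) (n : nat) (f g h : sc K n) (a b c k : 'I_n) :
  sw (xb K b) (fun s t => bm f (bm g (xb K a) (xb K t)) (bm h (xb K c) (xb K s))) 0 k =
  \sum_(s < n) \sum_(t < n | (val s + val t == val b)%N)
     \sum_(i < n) \sum_(j < n) g a t i * h c s j * f i j k.
Proof. rewrite sw_xb_coord; apply: eq_bigr => s _; apply: eq_bigr => t _; exact: bm2. Qed.

Theorem proposition7p1 (K : closedFieldType) (hK : [pchar K] =i pred0)
  (n : nat) (hn : (2 <= n)%N) (p d : sc K n) :
  regular_q_cycle p d ->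
  (forall one : 'I_n, val one = 1%N -> p one one one = 0) ->
  p = d ->
  (forall i zero one : 'I_n, val zero = 0%N -> val one = 1%N ->
     p i zero one = (val i == 1%N)%:R) ->
  (forall j one : 'I_n, val one = 1%N -> (0 < val j)%N -> p one j one = 0) ->
  forall i one : 'I_n, val one = 1%N -> p i one one = 0.
Proof.
move=> [[Hp _] Hcyc] _ Hpd H3 H4 i one Hone.
subst d.
pose q := qq p.
have qE : forall a b k (Ha : (a < n)%N) (Hb : (b < n)%N) (Hk : (k < n)%N),
    q a b k = p (Ordinal Ha) (Ordinal Hb) (Ordinal Hk).
  by move=> a b k Ha Hb Hk; rewrite -qqE.
have pE : p = fun a b k => q a b k.
  apply: functional_extensionality => a; apply: functional_extensionality => b.
  by apply: functional_extensionality => k; rewrite /q qqE.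
have h1n : (1 < n)%N by [].
have n0 : (0 < n)%N by lia.
rewrite -(qqE p i one one) Hone -/q.
apply: (@main_nat K n q h1n) => //; last first.
- move=> j Hj0 Hj; rewrite (qE _ _ _ h1n Hj h1n).
  by apply: H4.
- move=> a Ha; rewrite (qE _ _ _ Ha n0 h1n).
  by apply: H3.
- move=> x y z Hx Hy Hz.
  have [E _] := Hcyc (xb K (Ordinal Hx)) (xb K (Ordinal Hy)) (xb K (Ordinal Hz)).
  have := congr1 (fun M : 'rV[K]_n => M 0 (Ordinal h1n)) E => /= {E}.
  rewrite cyc_coord1 cyc_coord2 pE /= => E.
  rewrite -(@nsum_conv _ _ (fun s t => \sum_(0 <= i < n) \sum_(0 <= j < n) q x s i * q z t j * q i j 1%N) _ Hy).
  rewrite -(@nsum_conv _ _ (fun s t => \sum_(0 <= i < n) \sum_(0 <= j < n) q x t i * q y s j * q i j 1%N) _ Hz).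
  under eq_bigr => s _ do under eq_bigr => t _ do (rewrite big_mkord; under eq_bigr => ii _ do rewrite big_mkord).
  under [RHS]eq_bigr => s _ do under eq_bigr => t _ do (rewrite big_mkord; under eq_bigr => ii _ do rewrite big_mkord).
  exact: E.
- move=> k a b Hk0 Hk Ha Hb.
  have Hk1 : (k.-1 < n)%N by lia.
  case: Hp => _ HpM.
  have E := HpM (Ordinal Ha) (Ordinal Hb) (Ordinal h1n) (Ordinal Hk1).
  rewrite pE /= in E.
  rewrite (big_pred1 (Ordinal Hk)) /= in E; last first.
    move=> [k' Hk'] /=; apply/eqP/eqP => [h|h].
      by apply: val_inj => /=; lia.
    by have := congr1 val h => /= ->; lia.
  rewrite E.
  under eq_bigr => a' _ do under eq_bigr => b' _ do rewrite (@nsum_conv _ _ (fun c d => q a' c 1%N * q b' d k.-1)) //.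
  by rewrite (@nsum_conv _ _ (fun a' b' => \sum_(0 <= c < b.+1) q a' c 1%N * q b' (b - c)%N k.-1)).
- move=> a b Ha Hb; rewrite (qE _ _ _ Ha Hb n0).
  by case: Hp => Hp0 _; apply: Hp0.
Qed.
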